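(* Let $(G,X,\alpha)$ be a $G$-space with transitive action $\alpha$. Then there exist a $G$-space $(H,X,\gamma)$ with transitive action $\gamma$ such that $$\chi(H)\le\chi(X)\cdot\mathrm{inv}(G),\quad \mathrm{ib}(H)\le\mathrm{ib}(G),\quad w(H)\le\chi(X)\cdot\mathrm{ib}(G),$$ and an equivariant pair of maps $(\varphi,\mathrm{id}):(G,X,\alpha)\to(H,X,\gamma)$ with $\varphi$ an epimorphism.
   Context: All spaces are Tychonoff and all maps continuous. A $G$-space $(G,X,\alpha)$ is a topological group with a continuous action on $X$; transitive means $Gx=X$. An equivariant pair $(\varphi,\mathrm{id})$ is a continuous homomorphism $\varphi:G\to H$ with $\alpha(g,x)=\gamma(\varphi(g),x)$. The index of narrowness $\mathrm{ib}(G)$ is the least infinite cardinal $\tau$ such that for every neighborhood $U$ of the unit there is $A\subset G$ with $|A|\le\tau$ and $AU=G$. The invariance number $\mathrm{inv}(G)$ is the least infinite cardinal $\tau$ such that for every neighborhood $U$ of the unit there is a family $\gamma$ of at most $\tau$ neighborhoods of the unit such that for each $x\in G$ some $V\in\gamma$ satisfies $xVx^{-1}\subset U$. *)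

(* Defs.v *)
From HB Require Import structures.
From mathcomp Require Import all_boot all_order all_algebra.
From mathcomp Require Import all_classical all_reals all_analysis.
From mathcomp Require Import Rstruct Rstruct_topology.
Set Implicit Arguments. Unset Strict Implicit. Unset Printing Implicit Defensive.
Import Order.TTheory GRing.Theory Num.Theory.
Local Open Scope classical_set_scope.

Definition tychonoff (T : topologicalType) : Prop :=
  accessible_space T /\
  forall (x : T) (B : set T), closed B -> ~ B x ->
    exists f : T -> Rdefinitions.R,
      continuous f /\ f x = 0%R /\ (forall y, B y -> f y = 1%R).

Record topGroup := TopGroup {
  tg_sort :> topologicalType;
  tg_mul : tg_sort -> tg_sort -> tg_sort;
  tg_one : tg_sort;
  tg_inv : tg_sort -> tg_sort;
  tg_mulA : associative tg_mul;
  tg_mul1g : left_id tg_one tg_mul;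
  tg_mulVg : left_inverse tg_one tg_inv tg_mul;
  tg_mul_cont : continuous (fun p : tg_sort * tg_sort => tg_mul p.1 p.2);
  tg_inv_cont : continuous tg_inv }.

Definition is_Gspace (G : topGroup) (X : topologicalType) (alpha : G -> X -> X)
  : Prop :=
  [/\ tychonoff G, tychonoff X,
      continuous (fun p : G * X => alpha p.1 p.2),
      (forall x, alpha (tg_one G) x = x) &
      (forall g h x, alpha (tg_mul g h) x = alpha g (alpha h x))].

Definition transitive_action (G : topGroup) (X : Type) (alpha : G -> X -> X) :=
  forall x y : X, exists g : G, alpha g x = y.

Definition cont_hom (G H : topGroup) (phi : G -> H) : Prop :=
  continuous phi /\ forall g h, phi (tg_mul g h) = tg_mul (phi g) (phi h).

(** Cardinal invariants, expressed as "invariant <= |T|" for an index type T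
    (families of size <= |T| are the families indexed by T).  The invariants
    are by definition infinite cardinals, so "inv <= |T|" means: T infinite
    and the defining property holds with families indexed by T. *)
Definition infinite_type (T : Type) : Prop := exists f : nat -> T, injective f.

Definition char_le (X : topologicalType) (T : Type) : Prop :=
  infinite_type T /\
  forall x : X, exists B : T -> set X,
    (forall t, open (B t) /\ B t x) /\
    (forall U, nbhs x U -> exists t, B t `<=` U).

Definition weight_le (X : topologicalType) (T : Type) : Prop :=
  infinite_type T /\
  exists B : T -> set X,
    (forall t, open (B t)) /\
    (forall U x, open U -> U x -> exists t, B t x /\ B t `<=` U).

Definition ib_le (G : topGroup) (T : Type) : Prop :=
  infinite_type T /\
  forall U : set G, nbhs (tg_one G) U ->
    exists a : T -> G, forall g : G, exists t u, U u /\ g = tg_mul (a t) u.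

Definition inv_le (G : topGroup) (T : Type) : Prop :=
  infinite_type T /\
  forall U : set G, nbhs (tg_one G) U ->
    exists V : T -> set G,
      (forall t, nbhs (tg_one G) (V t)) /\
      (forall x : G, exists t, forall v, V t v ->
          U (tg_mul (tg_mul x v) (tg_inv x))).

(* Main.v *)
Require Import Defs.
From HB Require Import structures.
From mathcomp Require Import all_boot all_order all_algebra.
From mathcomp Require Import all_classical all_reals all_analysis.
From mathcomp Require Import Rstruct Rstruct_topology.
Local Open Scope classical_set_scope.


Set Implicit Arguments. Unset Strict Implicit. Unset Printing Implicit Defensive.


Section GroupLemmas.
Variable G : topGroup.
Local Notation m := (@tg_mul G).
Local Notation e := (@tg_one G).
Local Notation iv := (@tg_inv G).

Lemma gmul1 x : m e x = x. Proof. exact: tg_mul1g. Qed.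
Lemma gmulV' x : m (iv x) x = e. Proof. exact: tg_mulVg. Qed.
Lemma gmulA x y z : m x (m y z) = m (m x y) z. Proof. exact: tg_mulA. Qed.
Lemma gmulKV x y : m (iv x) (m x y) = y.
Proof. by rewrite gmulA gmulV' gmul1. Qed.
Lemma gmulV x : m x (iv x) = e.
Proof.
have -> : m x (iv x) = m (m (iv (iv x)) (iv x)) (m x (iv x)).
  by rewrite gmulV' gmul1.
by rewrite -gmulA (gmulKV x) gmulV'.
Qed.
Lemma gmulg1 x : m x e = x.
Proof. by rewrite -(gmulV' x) gmulA gmulV gmul1. Qed.
Lemma gmulK x y : m x (m (iv x) y) = y.
Proof. by rewrite gmulA gmulV gmul1. Qed.
Lemma gmulgK x y : m (m y x) (iv x) = y.
Proof. by rewrite -gmulA gmulV gmulg1. Qed.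
Lemma gmulgKV x y : m (m y (iv x)) x = y.
Proof. by rewrite -gmulA gmulV' gmulg1. Qed.
Lemma ginvK x : iv (iv x) = x.
Proof. by rewrite -[RHS](gmulKV (iv x)) gmulV' gmulg1. Qed.
Lemma ginv1 : iv e = e.
Proof. by rewrite -[LHS]gmul1 gmulV. Qed.
Lemma ginv_uniq a b : m a b = e -> iv a = b.
Proof. by move=> h; rewrite -[RHS](gmulKV a) h gmulg1. Qed.
Lemma ginvM x y : iv (m x y) = m (iv y) (iv x).
Proof. by apply: ginv_uniq; rewrite -gmulA (gmulA y) gmulV gmul1 gmulV. Qed.


Lemma mul_nbhs g h (S : set G) : nbhs (m g h) S ->
  exists P Q, [/\ nbhs g P, nbhs h Q & forall x y, P x -> Q y -> S (m x y)].
Proof.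
move=> Sn; have := @tg_mul_cont G (g, h) S Sn.
case=> -[P Q] /= [Pn Qn] PQS; exists P, Q; split => // x y Px Qy.
exact: (PQS (x, y)).
Qed.

Lemma lmul_nbhs c g (S : set G) : nbhs (m c g) S -> nbhs g [set y | S (m c y)].
Proof.
case/mul_nbhs => P [Q [Pn Qn PQ]]; apply: filterS Qn => y Qy.
exact: PQ (nbhs_singleton Pn) Qy.
Qed.

Lemma rmul_nbhs c g (S : set G) : nbhs (m g c) S -> nbhs g [set y | S (m y c)].
Proof.
case/mul_nbhs => P [Q [Pn Qn PQ]]; apply: filterS Pn => y Py.
exact: PQ Py (nbhs_singleton Qn).
Qed.

Lemma inv_nbhs g (S : set G) : nbhs (iv g) S -> nbhs g [set y | S (iv y)].
Proof. by move=> Sn; have := @tg_inv_cont G g S Sn. Qed.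

Lemma sqrt_nbhs (U : set G) : nbhs e U -> exists V : set G,
  [/\ nbhs e V, (forall x, V x -> V (iv x)) & forall u v, V u -> V v -> U (m u v)].
Proof.
move=> Un; have : nbhs (m e e) U by rewrite gmul1.
case/mul_nbhs => P [Q [Pn Qn PQ]].
have Wn : nbhs e (P `&` Q) by apply: filterI.
have Wn' : nbhs e [set y | (P `&` Q) (iv y)].
  by apply: inv_nbhs; rewrite ginv1.
exists ((P `&` Q) `&` [set y | (P `&` Q) (iv y)]); split.
- exact: filterI.
- by move=> x [Wx Wx']; split => //=; rewrite ginvK.
- by move=> u v [[Pu _] _] [[_ Qv] _]; apply: PQ.
Qed.

Lemma conj_nbhs x (U : set G) : nbhs e U ->
  nbhs e [set v | U (m (m x v) (iv x))].
Proof.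
move=> Un.
have : nbhs (m (m x e) (iv x)) U by rewrite gmulg1 gmulV.
move/rmul_nbhs; exact: lmul_nbhs.
Qed.

End GroupLemmas.


Definition injon {T U} (A : set T) (B : set U) (f : T -> U) :=
  (forall x, A x -> B (f x)) /\
  (forall x y, A x -> A y -> f x = f y -> x = y).

Section Comparable.
Variables (T U : Type) (t0 : T) (u0 : U) (A : set T) (B : set U).

Record pc := PC { cS : set T; cf : T -> U; cSA : cS `<=` A; cinj : injon cS B cf }.

Definition Rc (p q : pc) : bool :=
  `[< cS p `<=` cS q /\ (forall x, cS p x -> cf q x = cf p x) >].

Lemma comparable_sets : (exists f, injon A B f) \/ (exists g, injon B A g).
Proof.
have base : pc.
  have h1 : (@set0 T) `<=` A by [].
  have h2 : injon set0 B (fun _ : T => u0) by split => // x [].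
  exact: PC h1 h2.
have Rrefl p : Rc p p by apply/asboolP; split.
have Rtrans p q r : Rc p q -> Rc q r -> Rc p r.
  move=> /asboolP[pq fpq] /asboolP[qr fqr]; apply/asboolP; split.
    exact: subset_trans qr.
  by move=> x px; rewrite fqr ?fpq //; exact: pq.
have Rchain (C : set pc) : total_on C Rc -> exists t, forall s, C s -> Rc s t.
  move=> Ctot.
  pose S := \bigcup_(p in C) cS p.
  pose f x := if pselect (exists p, C p /\ cS p x) is left h
              then cf (projT1 (cid h)) x else u0.
  have fE q x : C q -> cS q x -> f x = cf q x.
    move=> Cq qx; rewrite /f; case: pselect => [h|]; last by move=> []; exists q.
    case: (cid h) => p /= [Cp px].
    by case: (Ctot _ _ Cp Cq) => /asboolP[sub E]; rewrite E.
  have SA : S `<=` A by move=> x [p _ px]; exact: cSA px.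
  have Sinj : injon S B f.
    split.
      by move=> x [p Cp px]; rewrite (fE p) //; exact: (cinj p).1.
    move=> x y [p Cp px] [q Cq qy].
    case: (Ctot _ _ Cp Cq) => /asboolP[sub _].
      rewrite (fE q x) // ?(fE q y) //; last exact: sub.
      by apply: (cinj q).2 => //; exact: sub.
    rewrite (fE p x) // (fE p y) //; last exact: sub.
    by apply: (cinj p).2 => //; exact: sub.
  exists (PC SA Sinj) => s Cs; apply/asboolP; split => /=.
    by move=> x sx; exists s.
  by move=> x sx; rewrite (fE s).
have [t tmax] := ZL_preorder base Rrefl Rtrans Rchain.
have [AS|] := pselect (A `<=` cS t).
  left; exists (cf t); split; first by move=> x /AS; exact: (cinj t).1.
  by move=> x y /AS ? /AS ?; exact: (cinj t).2.
move=> /existsNP[a /not_implyP[Aa nSa]].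
have [BS|] := pselect (B `<=` cf t @` cS t).
  right.
  pose g y := if pselect (exists x, cS t x /\ cf t x = y) is left h
              then projT1 (cid h) else t0.
  have gE y : B y -> cS t (g y) /\ cf t (g y) = y.
    move=> /BS[x tx <-]; rewrite /g; case: pselect => [h|]; last first.
      by move=> []; exists x.
    by case: (cid h).
  exists g; split; first by move=> y /gE[+ _]; exact: cSA.
  by move=> x y /gE[_ ex] /gE[_ ey] gxy; rewrite -ex -ey gxy.
move=> /existsNP[b /not_implyP[Bb nb]].
pose S' := cS t `|` [set a].
pose f' x := if pselect (x = a) is left _ then b else cf t x.
have S'A : S' `<=` A by move=> x [/cSA //|->].
have S'inj : injon S' B f'.
  split.
    by move=> x; rewrite /f'; case: pselect => // nxa [/(cinj t).1 //|].
  move=> x y; rewrite /f'.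
  case: pselect => [->|nxa]; case: pselect => [->|nya] //.
  - move=> _ [ty|//] E; exfalso; apply: nb; exists y => //.
  - move=> [tx|//] _ E; exfalso; apply: nb; exists x => //.
  - by move=> [tx|//] [ty|//]; exact: (cinj t).2.
have : Rc t (PC S'A S'inj).
  apply/asboolP; split => /=; first by move=> x tx; left.
  by move=> x tx; rewrite /f'; case: pselect => // xa; rewrite xa in tx.
move/tmax => /asboolP[/= sub _]; exfalso; apply: nSa; apply: sub; by right.
Qed.

End Comparable.

Section Hessenberg.
Variables (T : Type) (n : nat -> T) (ninj : injective n).

Let N0 := range n.
Let ninv (x : T) : nat :=
  if pselect (exists i, n i = x) is left h then projT1 (cid h) else 0%N.
Let ninvE i : ninv (n i) = i.
Proof.
rewrite /ninv; case: pselect => [h|]; last by move=> []; exists i.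
by case: (cid h) => j /= /ninj.
Qed.
Let f0 (z : T * T) : T := n (pickle (ninv z.1, ninv z.2)).

Let f0inj : injon (N0 `*` N0) N0 f0.
Proof.
split; first by move=> z _; exists (pickle (ninv z.1, ninv z.2)).
move=> [x y] [x' y'] /= [[i _ <-] [j _ <-]] [[i' _ <-] [j' _ <-]].
by rewrite /f0 /= !ninvE => /ninj /(pcan_inj pickleK) [-> ->].
Qed.

Record ph := PH { hS : set T; hf : T * T -> T;
  hN0 : N0 `<=` hS;
  hf0 : forall z, (N0 `*` N0) z -> hf z = f0 z;
  hinj : injon (hS `*` hS) hS hf }.

Definition Rh (p q : ph) : bool := `[< hS p `<=` hS q /\
  (forall z, (hS p `*` hS p) z -> hf q z = hf p z) >].

Lemma hessenberg : exists e : T * T -> T, injective e.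
Proof.
have base : ph.
  have h1 : N0 `<=` N0 by [].
  have h2 : forall z, (N0 `*` N0) z -> f0 z = f0 z by [].
  exact: PH h1 h2 f0inj.
have Rrefl p : Rh p p by apply/asboolP; split.
have Rtrans p q r : Rh p q -> Rh q r -> Rh p r.
  move=> /asboolP[pq fpq] /asboolP[qr fqr]; apply/asboolP; split.
    exact: subset_trans qr.
  by move=> z [px py]; rewrite fqr ?fpq //; split; apply: pq.
have Rchain (C : set ph) : total_on C Rh -> exists t, forall s, C s -> Rh s t.
  move=> Ctot.
  pose S := N0 `|` \bigcup_(p in C) hS p.
  pose f z := if pselect (exists p, C p /\ (hS p `*` hS p) z) is left h
              then hf (projT1 (cid h)) z else f0 z.
  have fE q z : C q -> (hS q `*` hS q) z -> f z = hf q z.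
    move=> Cq qz; rewrite /f; case: pselect => [h|]; last by move=> []; exists q.
    case: (cid h) => p /= [Cp pz].
    by case: (Ctot _ _ Cp Cq) => /asboolP[sub E]; rewrite E.
  have fN0 z : (N0 `*` N0) z -> f z = f0 z.
    move=> Nz; rewrite /f; case: pselect => // h.
    by case: (cid h) => p /= [Cp pz]; rewrite hf0.
  have two x y : S x -> S y -> (N0 x /\ N0 y) \/
     exists2 q, C q & hS q x /\ hS q y.
    move=> [Nx|[p Cp px]] [Ny|[q Cq qy]]; first by left.
    - by right; exists q => //; split => //; exact: hN0.
    - by right; exists p => //; split => //; exact: hN0.
    - right; case: (Ctot _ _ Cp Cq) => /asboolP[sub _].
        by exists q => //; split => //; exact: sub.
      by exists p => //; split => //; exact: sub.
  have Sinj : injon (S `*` S) S f.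
    split.
      move=> [x y] [/= Sx Sy]; case: (two _ _ Sx Sy) => [[Nx Ny]|[q Cq [qx qy]]].
        by rewrite fN0 //; left; exact: (f0inj.1 (x, y)).
      rewrite (fE q) //; right; exists q => //; exact: ((hinj q).1 (x, y)).
    move=> [x y] [x' y'] [/= Sx Sy] [/= Sx' Sy'].
    case: (two _ _ Sx Sy) => [[Nx Ny]|[q Cq [qx qy]]];
    case: (two _ _ Sx' Sy') => [[Nx' Ny']|[q' Cq' [qx' qy']]].
    - by rewrite !fN0 //; apply: f0inj.2.
    - rewrite (fN0 (x, y)) // (fE q' (x', y')) //; rewrite -(@hf0 q' (x, y)) //.
      by apply: (hinj q').2 => //; split; apply: hN0.
    - rewrite (fE q (x, y)) // (fN0 (x', y')) //; rewrite -(@hf0 q (x', y')) //.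
      by apply: (hinj q).2 => //; split; apply: hN0.
    - case: (Ctot _ _ Cq Cq') => /asboolP[sub _].
        rewrite (fE q' (x, y)) //; last by split; apply: sub.
        rewrite (fE q') //; apply: (hinj q').2 => //; split; exact: sub.
      rewrite (fE q (x', y')) //; last by split; apply: sub.
      rewrite (fE q) //; apply: (hinj q).2 => //; split; exact: sub.
  have SN0 : N0 `<=` S by move=> x; left.
  exists (PH SN0 fN0 Sinj) => s Cs; apply/asboolP; split => /=.
    by move=> x sx; right; exists s.
  by move=> z sz; rewrite (fE s).
have [t tmax] := ZL_preorder base Rrefl Rtrans Rchain.
set S := hS t; set f := hf t.
have S0 : S (n 0) by apply: hN0; exists 0%N.
have S1 : S (n 1) by apply: hN0; exists 1%N.
have n01 : n 0 <> n 1 by move/ninj.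
have [[g [gS ginj]]|[g [gS ginj]]] := comparable_sets (n 0) (n 0) S (~` S).
- (* extension contradicts maximality *)
  pose S' := S `|` g @` S.
  pose ginv z := if pselect (exists x, S x /\ g x = z) is left h
                 then projT1 (cid h) else n 0.
  have ginvE z : (g @` S) z -> S (ginv z) /\ g (ginv z) = z.
    move=> [x Sx <-]; rewrite /ginv; case: pselect => [h|]; last first.
      by move=> []; exists x.
    by case: (cid h).
  pose c z := if pselect (S z) is left _ then (z, n 0) else (ginv z, n 1).
  pose k z := f (c z).
  have kinj : injon S' S k.
    have cS z : S' z -> (S `*` S) (c z).
      rewrite /c; case: pselect => [Sz _|nSz [//|gz]]; first by split.
      by split => //; exact: (ginvE _ gz).1.
    split; first by move=> z /cS; exact: (hinj t).1.
    move=> x y Sx Sy /((hinj t).2 _ _ (cS _ Sx) (cS _ Sy)).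
    rewrite /c; case: pselect => [Sx'|nSx]; case: pselect => [Sy'|nSy].
    + by case.
    + by case=> _ /n01.
    + by case=> _ /esym/n01.
    + case=> E; move: Sx Sy => [/nSx[]|gx] [/nSy[]|gy].
      by rewrite -(ginvE _ gx).2 -(ginvE _ gy).2 E.
  pose h z := if pselect ((S `*` S) z) is left _ then f z
              else g (f (k z.1, k z.2)).
  have hinj' : injon (S' `*` S') S' h.
    have kk z : (S' `*` S') z -> (S `*` S) (k z.1, k z.2).
      by move=> [? ?]; split; apply: kinj.1.
    split.
      move=> z Sz; rewrite /h; case: pselect => [Sz'|_].
        by left; exact: (hinj t).1.
      by right; exists (f (k z.1, k z.2)) => //; apply: (hinj t).1; exact: kk.
    move=> z z' Sz Sz'; rewrite /h.
    case: pselect => [Sz1|nS1]; case: pselect => [Sz2|nS2].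
    + exact: (hinj t).2.
    + move=> E; exfalso; have := gS (f (k z'.1, k z'.2)).
      by rewrite -E; apply; apply: (hinj t).1 => //; exact: kk.
    + move=> E; exfalso; have := gS (f (k z.1, k z.2)).
      by rewrite E; apply; apply: (hinj t).1 => //; exact: kk.
    + move/(ginj _ _ ((hinj t).1 _ (kk _ Sz)) ((hinj t).1 _ (kk _ Sz'))).
      move/((hinj t).2 _ _ (kk _ Sz) (kk _ Sz')) => [E1 E2].
      move: Sz Sz' => [a1 a2] [b1 b2].
      move: z z' E1 E2 a1 a2 b1 b2 {nS1 nS2} => [z1 z2] [z1' z2'] /= E1 E2 a1 a2 b1 b2.
      by rewrite (kinj.2 _ _ a1 b1 E1) (kinj.2 _ _ a2 b2 E2).
  have N0S' : N0 `<=` S' by move=> x /(hN0 t) ?; left.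
  have h0 z : (N0 `*` N0) z -> h z = f0 z.
    move=> [N1 N2]; rewrite /h; case: pselect => [_|[]]; first exact: hf0.
    by split; apply: hN0.
  have : Rh t (PH N0S' h0 hinj').
    apply/asboolP; split => /=; first by move=> x Sx; left.
    by move=> z Sz; rewrite /h; case: pselect.
  move/tmax => /asboolP[/= sub _]; exfalso.
  have : S' (g (n 0)) by right; exists (n 0).
  by move/sub; apply: gS.
- pose c z := if pselect (S z) is left _ then (z, n 0) else (g z, n 1).
  have cS z : (S `*` S) (c z).
    by rewrite /c; case: pselect => [Sz|nSz]; split => //; exact: gS.
  have cinj' : injective c.
    move=> x y; rewrite /c; case: pselect => [Sx|nSx]; case: pselect => [Sy|nSy].
    + by case.
    + by case=> _ /n01.
    + by case=> _ /esym/n01.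
    + by case=> /ginj; apply.
  pose k z := f (c z).
  have kS z : S (k z) by apply: (hinj t).1.
  have kinj' : injective k.
    by move=> x y /((hinj t).2 _ _ (cS x) (cS y)) /cinj'.
  exists (fun z => f (k z.1, k z.2)) => -[x y] [x' y'] /=.
  move/((hinj t).2 (k x, k y) (k x', k y')) => /(_ (conj (kS _) (kS _))).
  by move=> /(_ (conj (kS _) (kS _))) [/kinj' -> /kinj' ->].
Qed.

End Hessenberg.

Inductive term (A D : Type) :=
| Leaf of A | Sq of term A D | Cj of term A D & D | Mt of term A D & term A D.
Arguments Leaf {A D}. Arguments Sq {A D}. Arguments Cj {A D}. Arguments Mt {A D}.

Fixpoint enc_term (A D I : Type) (e : I * I -> I) (n : nat -> I)
  (emb : A * D -> I) (a0 : A) (d0 : D) (t : term A D) : I :=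
  match t with
  | Leaf a => e (n 0%N, emb (a, d0))
  | Sq t => e (n 1%N, enc_term e n emb a0 d0 t)
  | Cj t d => e (n 2%N, e (enc_term e n emb a0 d0 t, emb (a0, d)))
  | Mt t t' => e (n 3%N, e (enc_term e n emb a0 d0 t, enc_term e n emb a0 d0 t'))
  end.

Lemma enc_term_inj (A D I : Type) (e : I * I -> I) (n : nat -> I)
  (emb : A * D -> I) (a0 : A) (d0 : D) :
  injective e -> injective n -> injective emb ->
  injective (enc_term e n emb a0 d0).
Proof.
move=> einj ninj embinj t; elim: t => [a|t IH|t IH d|t IH t' IH'] [b|s|s d'|s s'] /=;
  move/einj => E; move: (congr1 snd E) (ninj _ _ (congr1 fst E)) => /= E2 K;
  try discriminate K; move: E2.
- by move/embinj => [->].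
- by move/IH ->.
- by move/einj => [/IH -> /embinj [->]].
- by move/einj => [/IH -> /IH' ->].
Qed.

Lemma term_enc (A D : Type) (d0 : D) :
  (exists f : nat -> A, injective f) -> exists enc : term A D -> A * D, injective enc.
Proof.
move=> [f finj].
have ninj : injective (fun i => (f i, d0)) by move=> i j [/finj].
have [e einj] := hessenberg ninj.
exists (enc_term e (fun i => (f i, d0)) id (f 0%N) d0).
exact: enc_term_inj.
Qed.


Lemma prod_nbhsP (T U : topologicalType) (x : T) (y : U) (A : set (T * U)) :
  nbhs (x, y) A -> exists P Q, [/\ nbhs x P, nbhs y Q & P `*` Q `<=` A].
Proof. by move=> [[P Q] /= [Pn Qn] PQ]; exists P, Q. Qed.

Record gact (G : topGroup) (X : Type) := GAct {
  act :> G -> X -> X;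
  act1 : forall x, act (tg_one G) x = x;
  actM : forall g h x, act (tg_mul g h) x = act g (act h x) }.

Record gfilt (G : topGroup) := GFilt {
  gF :> set (set G);
  gF_filter : Filter gF;
  gF_one : forall U, gF U -> U (tg_one G);
  gF_sqrt : forall U, gF U ->
    exists2 V, gF V & (forall u v, V u -> V v -> U (tg_mul u v));
  gF_inv : forall U, gF U -> exists2 V, gF V & (forall v, V v -> U (tg_inv v));
  gF_conj : forall U x, gF U ->
    exists2 V, gF V & (forall v, V v -> U (tg_mul (tg_mul x v) (tg_inv x)))
}.

Definition HT (G : topGroup) (X : Type) (a : gact G X) (F : gfilt G) : Type :=
  {f : X -> X | exists g : G, f = a g}.

Section HConstr.
Variables (G : topGroup) (X : Type) (a : gact G X) (F : gfilt G).
Local Notation m := (@tg_mul G).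
Local Notation e := (@tg_one G).
Local Notation iv := (@tg_inv G).
Local Notation H := (HT a F).

HB.instance Definition _ := gen_eqMixin H.
HB.instance Definition _ := gen_choiceMixin H.

Definition pi (g : G) : H := exist _ (a g) (ex_intro _ g erefl).
Definition rep (p : H) : G := projT1 (cid (proj2_sig p)).

Lemma H_ext (p q : H) : sval p = sval q -> p = q.
Proof. by case: p => f pf; case: q => f' pf' /= E; subst; congr exist. Qed.

Lemma piE g h : a g = a h -> pi g = pi h.
Proof. by move=> E; apply: H_ext. Qed.

Lemma rep_act p : a (rep p) = sval p.
Proof. by rewrite /rep; case: (cid _) => g /= ->. Qed.

Lemma piK p : pi (rep p) = p.
Proof. by apply: H_ext => /=; rewrite rep_act. Qed.

Lemma pi_surj (P : H -> Prop) : (forall g, P (pi g)) -> forall p, P p.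
Proof. by move=> Pg p; rewrite -(piK p). Qed.

Definition mulH (p q : H) : H := pi (m (rep p) (rep q)).
Definition invH (p : H) : H := pi (iv (rep p)).
Definition oneH : H := pi e.

Lemma act_ext g h : a g = a h -> forall x, a g x = a h x.
Proof. by move=> ->. Qed.

Lemma mulHE g h : mulH (pi g) (pi h) = pi (m g h).
Proof.
apply: piE; apply: funext => x; rewrite !actM.
have -> : a (rep (pi g)) = a g by rewrite rep_act.
by have -> : a (rep (pi h)) = a h by rewrite rep_act.
Qed.

Lemma act_inv g x : a (iv g) (a g x) = x.
Proof. by rewrite -actM gmulV' act1. Qed.

Lemma invHE g : invH (pi g) = pi (iv g).
Proof.
apply: piE; apply: funext => x; set g' := rep (pi g).
have E : a g' = a g by rewrite rep_act.
have hx : a g (a (iv g) x) = x by rewrite -actM gmulV act1.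
by rewrite -{1}hx -E act_inv.
Qed.

Lemma mulHA : associative mulH.
Proof.
elim/pi_surj => x; elim/pi_surj => y; elim/pi_surj => z.
by rewrite !mulHE gmulA.
Qed.
Lemma mul1H : left_id oneH mulH.
Proof. by elim/pi_surj => x; rewrite /oneH mulHE gmul1. Qed.
Lemma mulVH : left_inverse oneH invH mulH.
Proof. by elim/pi_surj => x; rewrite invHE mulHE gmulV'. Qed.

Definition entH : set (set (H * H)) :=
  [set E | exists2 U, gF F U & forall g u, U u -> E (pi g, pi (m g u))].

Lemma entH_filter : Filter entH.
Proof.
have Ff := gF_filter F.
constructor.
- by exists setT => //; exact: filterT.
- move=> E1 E2 [U1 FU1 h1] [U2 FU2 h2]; exists (U1 `&` U2).
    exact: filterI.
  by move=> g u [/h1 ? /h2 ?].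
- move=> E1 E2 sub [U FU h]; exists U => // g u Uu; exact/sub/h.
Qed.

Lemma entH_diag E : entH E -> diagonal `<=` E.
Proof.
move=> [U FU h] [p q] pq; have {pq} -> : q = p by exact: (esym pq).
elim/pi_surj: p => g.
by have := h g e (gF_one FU); rewrite gmulg1.
Qed.

Local Open Scope relation_scope.

Lemma entH_inv E : entH E -> entH E^-1.
Proof.
move=> [U FU h]; have [V FV hV] := gF_inv FU.
exists V => // g v Vv /=.
have := h (m g v) (iv v) (hV _ Vv); by rewrite gmulgK.
Qed.

Lemma entH_split E : entH E -> exists2 B, entH B & B \; B `<=` E.
Proof.
move=> [U FU h]; have [V FV hV] := gF_sqrt FU.
exists [set pq | exists g v, V v /\ pq = (pi g, pi (m g v))].
  by exists V => // g v Vv; exists g, v.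
move=> [p r] /= [q [g1 [v1 [Vv1 [-> ->]]]] [g2 [v2 [Vv2 [E1 ->]]]]].
have := h g1 (m v1 v2) (hV _ _ Vv1 Vv2).
by rewrite -[pi (m g2 v2)]mulHE -(piE E1) mulHE -gmulA.
Qed.

Local Close Scope relation_scope.

HB.instance Definition _ := isUniform.Build H
  entH_filter entH_diag entH_inv entH_split.

Lemma nbhsHP g (S : set H) :
  nbhs (pi g) S <-> exists2 U, gF F U & forall u, U u -> S (pi (m g u)).
Proof.
split.
  rewrite -nbhs_entourageE => -[E [U FU h] sub]; exists U => // u Uu.
  by apply: sub; apply/xsectionP; exact: h.
move=> [U FU h]; rewrite -nbhs_entourageE.
exists [set pq | exists g' u, U u /\ pq = (pi g', pi (m g' u))].
  by exists U => // g' u Uu; exists g', u.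
move=> q /xsectionP [g' [u [Uu [E ->]]]].
by rewrite -mulHE -(piE E) mulHE; exact: h.
Qed.

Lemma mulH_cont : continuous (fun pq : H * H => mulH pq.1 pq.2).
Proof.
move=> [p q]; elim/pi_surj: p => g; elim/pi_surj: q => h S /=.
rewrite mulHE => /nbhsHP [U FU hU].
have [V FV hV] := gF_sqrt FU.
have [V1 FV1 hV1] := gF_conj (iv h) FV.
exists ([set p | exists2 v, V1 v & p = pi (m g v)],
        [set q | exists2 v, V v & q = pi (m h v)]).
  split => /=; apply/nbhsHP.
    by exists V1 => // v Vv; exists v.
  by exists V => // v Vv; exists v.
move=> [p' q'] /= [[v1 Vv1 ->] [v2 Vv2 ->]]; rewrite mulHE.
have := hU _ (hV _ _ (hV1 _ Vv1) Vv2).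
rewrite ginvK.
have -> : m (m g h) (m (m (m (iv h) v1) h) v2) = m (m g v1) (m h v2).
  by rewrite !gmulA gmulgK.
by [].
Qed.

Lemma invH_cont : continuous invH.
Proof.
elim/pi_surj => g S; rewrite invHE => /nbhsHP [U FU hU].
have [V1 FV1 hV1] := gF_conj g FU.
have [V FV hV] := gF_inv FV1.
apply/nbhsHP; exists V => // v Vv /=; rewrite invHE.
have := hU _ (hV1 _ (hV _ Vv)); rewrite ginvM.
by rewrite gmulA gmulKV.
Qed.

Definition Hgrp : topGroup :=
  @TopGroup H mulH oneH invH mulHA mul1H mulVH mulH_cont invH_cont.

End HConstr.

Section HAction.
Variables (G : topGroup) (X : topologicalType) (a : gact G X) (F : gfilt G).
Local Notation m := (@tg_mul G).
Local Notation e := (@tg_one G).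
Local Notation iv := (@tg_inv G).
Local Notation H := (Hgrp a F).

Hypothesis acont : continuous (fun q : G * X => a q.1 q.2).
Hypothesis Kprop : forall (y : X) (O : set X), nbhs y O ->
  exists2 U, gF F U & exists2 P, nbhs y P & forall u z, U u -> P z -> O (a u z).
Hypothesis Fnbhs : forall U, gF F U -> nbhs e U.

Definition gam (p : H) (x : X) : X := sval p x.

Lemma gam_pi g x : gam (pi a F g) x = a g x. Proof. by []. Qed.

Lemma act_nbhs g y (O : set X) : nbhs (a g y) O -> nbhs y [set z | O (a g z)].
Proof.
move=> On; have := @acont (g, y) O On.
move/prod_nbhsP => [P [Q [Pn Qn PQ]]]; apply: filterS Qn => z Qz.
by apply: (PQ (g, z)); split => //; exact: nbhs_singleton.
Qed.

Lemma gam_cont : continuous (fun q : H * X => gam q.1 q.2).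
Proof.
move=> [p y]; elim/pi_surj: p => g O On0; have On := @act_nbhs g y O On0.
have [U FU [P Pn hUP]] := Kprop On.
exists ([set p | exists2 u, U u & p = pi a F (m g u)], P).
  split => //=; apply/nbhsHP; by exists U => // u Uu; exists u.
move=> [p z] /= [[u Uu ->] Pz]; rewrite gam_pi actM.
exact: hUP.
Qed.

Lemma gam_one x : gam (tg_one H) x = x.
Proof. exact: act1. Qed.

Lemma gam_mul p q x : gam (tg_mul p q) x = gam p (gam q x).
Proof.
elim/pi_surj: p => g; elim/pi_surj: q => h.
change (gam (mulH (pi a F g) (pi a F h)) x = gam (pi a F g) (gam (pi a F h) x)).
by rewrite mulHE !gam_pi actM.
Qed.

Lemma pi_cont : continuous (pi a F).
Proof.
move=> g S /nbhsHP [U FU hU].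
have : nbhs (m g e) [set h | U (m (iv g) h)].
  by rewrite gmulg1; apply: lmul_nbhs; rewrite gmulV'; exact: Fnbhs.
rewrite gmulg1 => hn; apply: filterS hn => h Uh /=.
by have := hU _ Uh; rewrite gmulK.
Qed.

Lemma pi_hom g h : pi a F (m g h) = @tg_mul H (pi a F g) (pi a F h).
Proof. by rewrite /= mulHE. Qed.

Hypothesis Xtych : Defs.tychonoff X.

Lemma H_accessible : accessible_space H.
Proof.
move=> p q /eqP pq.
have [y ny] : exists y, sval p y <> sval q y.
  case: (pselect (exists y, sval p y <> sval q y)) => // nE; exfalso.
  apply: pq; apply: H_ext; apply: funext => y.
  by case: (pselect (sval p y = sval q y)) => // ny; exfalso; apply: nE; exists y.
have cl : closed [set sval q y] := @accessible_closed_set1 X Xtych.1 (sval q y).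
exists [set s : H | sval s y <> sval q y]; split.
- rewrite openE => s /= sy; rewrite /interior.
  have : nbhs (gam s y) (~` [set sval q y]).
    by apply: open_nbhs_nbhs; split => //; exact: closed_openC.
  move/(@gam_cont (s, y))/prod_nbhsP => [P [Q [Pn Qn PQ]]].
  apply: filterS Pn => s' Ps'.
  by apply: (PQ (s', y)); split => //; exact: nbhs_singleton.
- by rewrite inE.
- by rewrite inE /=; apply.
Qed.

Lemma H_tych : Defs.tychonoff H.
Proof.
split; first exact: H_accessible.
move=> x B clB nBx.
have := @uniform_completely_regular Rdefinitions.R (HT a F) x B clB nBx.
case/(@uniform_separatorP _ Rdefinitions.R) => f [fc _ f0 f1]; exists f; split => //; split.
  by have := f0 (f x); apply; exists x.
by move=> y By; have := f1 (f y); apply; exists y.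
Qed.

End HAction.


Section FConstr.
Variables (G : topGroup) (A D : Type) (a0 : A).
Local Notation m := (@tg_mul G).
Local Notation e := (@tg_one G).
Local Notation iv := (@tg_inv G).
Variable leaf : A -> set G.
Hypothesis leaf_nbhs : forall a, nbhs e (leaf a).
Hypothesis Dinv : forall U : set G, nbhs e U ->
  exists V : D -> set G, (forall t, nbhs e (V t)) /\
    (forall x : G, exists t, forall v, V t v -> U (m (m x v) (iv x))).

Definition sq (U : set G) : set G :=
  if pselect (nbhs e U) is left h then projT1 (cid (sqrt_nbhs h)) else setT.

Lemma sqP U : nbhs e U -> [/\ nbhs e (sq U), (forall x, sq U x -> sq U (iv x))
  & forall u v, sq U u -> sq U v -> U (m u v)].
Proof. by move=> h; rewrite /sq; case: pselect => // h'; case: (cid _). Qed.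

Definition cj (U : set G) (d : D) : set G :=
  if pselect (nbhs e U) is left h then projT1 (cid (Dinv h)) d else setT.

Lemma cjP U : nbhs e U -> (forall d, nbhs e (cj U d)) /\
  (forall x : G, exists d, forall v, cj U d v -> U (m (m x v) (iv x))).
Proof. by move=> h; rewrite /cj; case: pselect => // h'; case: (cid _). Qed.

Fixpoint Sset (t : term A D) : set G :=
  match t with
  | Leaf a => leaf a
  | Sq t => sq (Sset t)
  | Cj t d => cj (Sset t) d
  | Mt t t' => Sset t `&` Sset t'
  end.

Lemma Sset_nbhs t : nbhs e (Sset t).
Proof.
elim: t => [a|t IH|t IH d|t IH t' IH'] /=.
- exact: leaf_nbhs.
- by case: (sqP IH).
- by case: (cjP IH).
- exact: filterI.
Qed.

Definition FS : set (set G) := [set U | exists t, Sset t `<=` U].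

Lemma FS_filter : Filter FS.
Proof.
constructor.
- by exists (Leaf a0).
- move=> U V [t tU] [t' t'V]; exists (Mt t t') => x [/tU ? /t'V ?]; by split.
- by move=> U V UV [t tU]; exists t; exact: subset_trans UV.
Qed.

Lemma FS_one U : FS U -> U e.
Proof. by move=> [t tU]; apply: tU; exact: nbhs_singleton (Sset_nbhs t). Qed.

Lemma sq_sub U : nbhs e U -> sq U `<=` U.
Proof.
move=> h x sx; case: (sqP h) => sn _ sm.
by have := sm x e sx (nbhs_singleton sn); rewrite gmulg1.
Qed.

Lemma FS_sqrt U : FS U -> exists2 V, FS V & (forall u v, V u -> V v -> U (m u v)).
Proof.
move=> [t tU]; exists (Sset (Sq t)); first by exists (Sq t).
by move=> u v /= su sv; apply: tU; case: (sqP (Sset_nbhs t)) => _ _; apply.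
Qed.

Lemma FS_inv U : FS U -> exists2 V, FS V & (forall v, V v -> U (iv v)).
Proof.
move=> [t tU]; exists (Sset (Sq t)); first by exists (Sq t).
move=> v /= sv; apply/tU/(sq_sub (Sset_nbhs t)).
by case: (sqP (Sset_nbhs t)) => _ + _; apply.
Qed.

Lemma FS_conj U x : FS U ->
  exists2 V, FS V & (forall v, V v -> U (m (m x v) (iv x))).
Proof.
move=> [t tU]; have [_ /(_ x) [d hd]] := cjP (Sset_nbhs t).
exists (Sset (Cj t d)); first by exists (Cj t d).
by move=> v /hd /tU.
Qed.

Definition Fgf : gfilt G := GFilt FS_filter FS_one FS_sqrt FS_inv FS_conj.

Lemma Fgf_nbhs U : gF Fgf U -> nbhs e U.
Proof. by move=> [t tU]; exact: (filterS tU (Sset_nbhs t)). Qed.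

Lemma Fgf_leaf a' : gF Fgf (leaf a').
Proof. by exists (Leaf a'). Qed.

Lemma Fgf_S t : gF Fgf (Sset t).
Proof. by exists t. Qed.

Lemma Fgf_sq t u v : Sset (Sq t) u -> Sset (Sq t) v -> Sset t (m (iv u) v).
Proof.
move=> su sv; case: (sqP (Sset_nbhs t)) => _ sym sm.
by apply: sm => //; apply: sym.
Qed.

End FConstr.


Section HCard.
Variables (G : topGroup) (X : topologicalType) (a : gact G X) (A D : Type) (a0 : A).
Local Notation m := (@tg_mul G).
Local Notation e := (@tg_one G).
Local Notation iv := (@tg_inv G).
Variable leaf : A -> set G.
Hypothesis leaf_nbhs : forall a, nbhs e (leaf a).
Hypothesis Dinv : forall U : set G, nbhs e U ->
  exists V : D -> set G, (forall t, nbhs e (V t)) /\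
    (forall x : G, exists t, forall v, V t v -> U (m (m x v) (iv x))).
Local Notation F := (@Fgf G A D a0 leaf leaf_nbhs Dinv).
Local Notation H := (Hgrp a F).
Local Notation S := (@Sset G A D leaf Dinv).
Local Notation pi := (pi a F).

Definition Nset (g : G) (t : term A D) : set H :=
  [set q | exists2 u, S t u & q = pi (m g u)].

Lemma Nset_nbhs g t : nbhs (pi g) (Nset g t).
Proof. by apply/nbhsHP; exists (S t); [exact: Fgf_S | move=> u su; exists u]. Qed.

Lemma Nset_base g (U : set H) : nbhs (pi g) U -> exists t, Nset g t `<=` U.
Proof.
case/nbhsHP => U0 [t tU] hU; exists t => q [u su ->]; exact/hU/tU.
Qed.

Lemma H_char (I : Type) (enc : term A D -> I) :
  injective enc -> infinite_type I -> char_le H I.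
Proof.
move=> encinj Iinf; split => // p.
pose B i : set H := if pselect (exists t, enc t = i) is left h
  then (Nset (rep p) (projT1 (cid h)))° else setT.
exists B; split.
  move=> i; rewrite /B; case: pselect => [h|_]; last by split => //; exact: openT.
  split; first exact: open_interior.
  by rewrite /interior /=; rewrite -{1}(piK p); exact: Nset_nbhs.
move=> U; rewrite -{1}(piK p) => /Nset_base [t tU]; exists (enc t).
rewrite /B; case: pselect => [h|[]]; last by exists t.
case: (cid h) => t' /= /encinj ->.
exact: subset_trans (@interior_subset _ _) tU.
Qed.

Lemma H_ib (D' : Type) : ib_le G D' -> ib_le H D'.
Proof.
move=> [Dinf ibD]; split => // U Un.
have : nbhs e [set g | U (pi g)].
  exact: (@pi_cont _ _ _ _ (Fgf_nbhs (leaf_nbhs:=leaf_nbhs) (Dinv:=Dinv) (a0:=a0)) e U Un).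
move/ibD => [b hb]; exists (fun t => pi (b t)); elim/pi_surj => g.
have [t [u [Uu ->]]] := hb g; exists t, (pi u); split => //.
exact: pi_hom.
Qed.

Lemma H_weight (C I : Type) (enc : C * term A D -> I) :
  injective enc -> infinite_type I -> ib_le G C -> weight_le H I.
Proof.
move=> encinj Iinf [_ ibC]; split => //.
pose O (t : term A D) : set H := (Nset e t)°.
have On t : nbhs e [set g | O t (pi g)].
  apply: (@pi_cont _ _ _ _ (Fgf_nbhs (leaf_nbhs:=leaf_nbhs) (Dinv:=Dinv) (a0:=a0)) e).
  rewrite /O; apply: open_nbhs_nbhs; split; first exact: open_interior.
  exact: Nset_nbhs.
pose b t := projT1 (cid (ibC _ (On t))).
have bP t g : exists c u, O t (pi u) /\ g = m (b t c) u.
  by rewrite /b; case: (cid _) => f /= hf; apply: hf.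
pose beta (ct : C * term A D) : set H :=
  [set q | O ct.2 (@tg_mul H (@tg_inv H (pi (b ct.2 ct.1))) q)].
have beta_open ct : open (beta ct).
  rewrite openE; elim/pi_surj => g; rewrite /beta /= => hg.
  rewrite /interior; apply/nbhsHP.
  have : nbhs (pi (m (iv (b ct.2 ct.1)) g)) (O ct.2).
    apply: open_nbhs_nbhs; split; first exact: open_interior.
    by move: hg; rewrite /= invHE mulHE.
  case/nbhsHP => U FU hU; exists U => // u Uu.
  by rewrite /= invHE mulHE gmulA; exact: hU.
pose W i : set H := if pselect (exists ct, enc ct = i) is left h
  then beta (projT1 (cid h)) else set0.
exists W; split.
  move=> i; rewrite /W; case: pselect => [h|_]; last exact: open0.
  exact: beta_open.
move=> U q; elim/pi_surj: q => g oU Ug.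
have := oU; rewrite openE => /(_ _ Ug); rewrite /interior => /Nset_base [t0 t0U].
have [c [u [Ou gE]]] := bP (Sq t0) g.
exists (enc (c, Sq t0)).
have -> : W (enc (c, Sq t0)) = beta (c, Sq t0).
  rewrite /W; case: pselect => [h|[]]; last by exists (c, Sq t0).
  by case: (cid h) => ct /= /encinj ->.
split.
  rewrite /beta /= gE invHE mulHE gmulA gmulV' gmul1; exact: Ou.
move=> q; elim/pi_surj: q => h; rewrite /beta /= invHE mulHE => /interior_subset.
move=> [s ss] /(congr1 sval) /= Es.
have /interior_subset [u' su' /(congr1 sval) /= Eu] := Ou.
apply: t0U; exists (m (iv u') s); first exact: Fgf_sq.
rewrite gmul1 in Es Eu.
apply: piE; apply: funext => x.
rewrite gE !actM.
have -> : a u (a (iv u') (a s x)) = a s x.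
  by rewrite (act_ext Eu) gmul1 -actM gmulV act1.
by rewrite -(act_ext Es) -actM gmulK.
Qed.


End HCard.


Lemma guran (G : topGroup) (C : Type) : ib_le G C -> inv_le G C.
Proof.
move=> [Cinf ibC]; split => // U Un.
have [V1 [V1n V1s V1m]] := sqrt_nbhs Un.
have [V2 [V2n V2s V2m]] := sqrt_nbhs V1n.
have V2e : V2 (tg_one G) := nbhs_singleton V2n.
have [b hb] := ibC _ V2n.
exists (fun c => [set w | V2 (tg_mul (tg_mul (tg_inv (b c)) w) (b c))]); split.
  move=> c; have := conj_nbhs (tg_inv (b c)) V2n; by rewrite ginvK.
move=> x; have [c [u [V2u E]]] := hb (tg_inv x); exists c => v /= hv.
have xE : x = tg_mul (tg_inv u) (tg_inv (b c)).
  by rewrite -[x]ginvK E ginvM.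
rewrite xE ginvM !ginvK.
have -> : tg_mul (tg_mul (tg_mul (tg_inv u) (tg_inv (b c))) v) (tg_mul (b c) u) =
  tg_mul (tg_mul (tg_inv u) (tg_mul (tg_mul (tg_inv (b c)) v) (b c))) u.
  by rewrite !gmulA.
apply: V1m; first by apply: V2m => //; exact: V2s.
by have := V2m _ _ V2u V2e; rewrite gmulg1.
Qed.


Section Main.
Variables (G : topGroup) (X : topologicalType) (alpha : G -> X -> X).
Variables (A B C D : Type) (jB : D -> B) (jC : D -> C).
Hypotheses (jBinj : injective jB) (jCinj : injective jC).
Hypothesis Gsp : is_Gspace alpha.
Hypothesis tr : transitive_action alpha.
Hypothesis chX : char_le X A.
Hypothesis invD : inv_le G D.
Hypothesis ibC : ib_le G C.
Local Notation m := (@tg_mul G).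
Local Notation e := (@tg_one G).
Local Notation iv := (@tg_inv G).

Let tX : Defs.tychonoff X. Proof. by case: Gsp. Qed.
Let acont : continuous (fun p : G * X => alpha p.1 p.2). Proof. by case: Gsp. Qed.
Let a1 : forall x, alpha e x = x. Proof. by case: Gsp. Qed.
Let aM : forall g h x, alpha (m g h) x = alpha g (alpha h x). Proof. by case: Gsp. Qed.

Let act : gact G X := @GAct G X alpha a1 aM.

Lemma core (leaf : A -> set G) (leaf_nbhs : forall a, nbhs e (leaf a))
  (KL : forall (y : X) (O : set X), nbhs y O -> exists a' k,
     exists2 P, nbhs y P &
       forall u z, leaf a' (m (m (iv k) u) k) -> P z -> O (alpha u z)) :
  exists (H : topGroup) (gamma : H -> X -> X) (phi : G -> H),
    is_Gspace gamma /\ transitive_action gamma /\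
    char_le H (A * B)%type /\
    (forall D : Type, ib_le G D -> ib_le H D) /\
    weight_le H (A * C)%type /\
    cont_hom phi /\ (forall h : H, exists g : G, phi g = h) /\
    (forall g x, alpha g x = gamma (phi g) x).
Proof.
have [Ainf _] := chX.
have [fA fAinj] := Ainf.
have [[fD fDinj] Dinv] := invD.
have [[fC fCinj] _] := ibC.
pose a0 := fA 0%N; pose d0 := fD 0%N.
pose F := @Fgf G A D a0 leaf leaf_nbhs Dinv.
have Fn : forall U, gF F U -> nbhs e U.
  exact: (Fgf_nbhs (leaf_nbhs:=leaf_nbhs) (Dinv:=Dinv) (a0:=a0)).
have Kprop : forall (y : X) (O : set X), nbhs y O ->
    exists2 U, gF F U & exists2 P, nbhs y P &
      forall u z, U u -> P z -> O (act u z).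
  move=> y O On; have [a' [k [P Pn hP]]] := @KL y O On.
  have [V FV hV] := gF_conj (iv k) (@Fgf_leaf G A D a0 leaf leaf_nbhs Dinv a').
  exists V => //; exists P => // u z Vu Pz; apply: hP => //.
  by have := hV _ Vu; rewrite ginvK.
pose H := Hgrp act F.
exists H, (@gam G X act F), (pi act F).
split.
  split.
  - exact: (@H_tych G X act F acont Kprop tX).
  - exact: tX.
  - exact: (@gam_cont G X act F acont Kprop).
  - exact: gam_one.
  - exact: gam_mul.
split.
  move=> x y; have [g <-] := tr x y; by exists (pi act F g).
have [enc encinj] := term_enc d0 Ainf.
split.
  apply: (@H_char G X act A D a0 leaf leaf_nbhs Dinv (A * B)%type
           (fun t => ((enc t).1, jB (enc t).2))).
    move=> t t' [E1 /jBinj E2]; apply: encinj.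
    by move: E1 E2; case: (enc t) => ? ?; case: (enc t') => ? ? /= -> ->.
  by exists (fun n => (fA n, jB d0)) => i j [/fAinj].
split.
  move=> D' ibD'; exact: (@H_ib G X act A D a0 leaf leaf_nbhs Dinv D' ibD').
split.
  have [eC eCinj] := hessenberg fCinj.
  apply: (@H_weight G X act A D a0 leaf leaf_nbhs Dinv C (A * C)%type
           (fun ct => ((enc ct.2).1, eC (ct.1, jC (enc ct.2).2)))) => //.
    move=> [c t] [c' t'] /= [E1 /eCinj [-> /jCinj E2]]; congr pair.
    apply: encinj.
    by move: E1 E2; case: (enc t) => ? ?; case: (enc t') => ? ? /= -> ->.
  by exists (fun n => (fA n, fC n)) => i j [/fAinj].
split.
  split; first exact: (pi_cont Fn).
  exact: pi_hom.
split.
  by move=> h; exists (rep h); exact: piK.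
by [].
Qed.

Lemma main_with :
  exists (H : topGroup) (gamma : H -> X -> X) (phi : G -> H),
    is_Gspace gamma /\ transitive_action gamma /\
    char_le H (A * B)%type /\
    (forall D : Type, ib_le G D -> ib_le H D) /\
    weight_le H (A * C)%type /\
    cont_hom phi /\ (forall h : H, exists g : G, phi g = h) /\
    (forall g x, alpha g x = gamma (phi g) x).
Proof.
have [x0|nX] := pselect (exists x : X, True); last first.
  apply: (@core (fun _ => setT)) => [a|y]; first exact: filterT.
  by exfalso; apply: nX; exists y.
case: x0 => x0 _.
have [_ /(_ x0) [Bx [Bo Bb]]] := chX.
have hl a : exists PQ : set G * set X, [/\ nbhs e PQ.1, nbhs x0 PQ.2 &
    forall u z, PQ.1 u -> PQ.2 z -> Bx a (alpha u z)].
  have : nbhs (alpha e x0) (Bx a).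
    by rewrite a1; apply: open_nbhs_nbhs; exact: Bo.
  move/(@acont (e, x0))/prod_nbhsP => [P [Q [Pn Qn PQ]]].
  exists (P, Q); split => // u z Pu Qz.
  by apply: (PQ (u, z)).
pose LQ a := projT1 (cid (hl a)).
have LQP a := projT2 (cid (hl a)).
apply: (@core (fun a => (LQ a).1)) => [a|y O On].
  by case: (LQP a).
have [k ky] := tr x0 y.
have : nbhs (act k x0) O by rewrite /= ky.
move/(@act_nbhs G X act acont) => /Bb [a' Ba'].
exists a', k.
case: (LQP a') => _ Qn hLQ.
exists [set z | (LQ a').2 (alpha (iv k) z)].
  apply: (@act_nbhs G X act acont (iv k) y).
  by rewrite /= -ky -aM gmulV' a1.
move=> u z Lu Qz; have := Ba' _ (hLQ _ _ Lu Qz) => /=.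
rewrite -!aM.
have -> : m (m k (m (m (iv k) u) k)) (iv k) = u.
  by rewrite !gmulA gmulV gmul1 gmulgK.
by [].
Qed.

End Main.

Unset Implicit Arguments.
Theorem theorem3p9 (G : topGroup) (X : topologicalType) (alpha : G -> X -> X)
  (A B C : Type) :
  is_Gspace alpha -> transitive_action alpha ->
  char_le X A -> inv_le G B -> ib_le G C ->
  exists (H : topGroup) (gamma : H -> X -> X) (phi : G -> H),
    is_Gspace gamma /\ transitive_action gamma /\
    char_le H (A * B)%type /\
    (forall D : Type, ib_le G D -> ib_le H D) /\
    weight_le H (A * C)%type /\
    cont_hom phi /\ (forall h : H, exists g : G, phi g = h) /\
    (forall g x, alpha g x = gamma (phi g) x).
Proof.
move=> Gsp tr chX invB ibC.
have [[fB _] _] := invB; have [[fC _] _] := ibC.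
have [[f [_ finj]]|[g [_ ginj]]] := comparable_sets (fB 0%N) (fC 0%N) setT setT.
- apply: (@main_with G X alpha A B C B id f) => //.
  by move=> x y; apply: finj.
- apply: (@main_with G X alpha A B C C g id) => //.
    by move=> x y; apply: ginj.
  exact: guran.
Qed.
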